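(* Let $n$ be a positive integer and $\alpha_0,\alpha_1,\dots,\alpha_n$ non-negative integers. Then $$\det_{0\le i,j\le n-1}\bigl(C_{\alpha_i+j}+C_{\alpha_{i+1}+j}\bigr)=\prod_{0\le i<j\le n}(\alpha_j-\alpha_i)\prod_{i=0}^{n-1}\frac{(i+n)!}{(2i)!}\prod_{i=0}^{n}\frac{(2\alpha_i)!}{\alpha_i!\,(\alpha_i+n)!}\times\sum_{s=0}^{n}\frac{\alpha_s!\,(\alpha_s+n)!}{(2\alpha_s)!\prod_{j=0}^{s-1}(\alpha_s-\alpha_j)\prod_{j=s+1}^{n}(\alpha_j-\alpha_s)}.$$
   Context: $C_m=\frac{1}{m+1}\binom{2m}{m}$ denotes the $m$-th Catalan number. *)

(* Defs.v *)
From mathcomp Require Import all_boot all_order all_algebra.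
Set Implicit Arguments. Unset Strict Implicit. Unset Printing Implicit Defensive.
Import Order.TTheory GRing.Theory Num.Theory.
Local Open Scope ring_scope.

Definition catalan (m : nat) : rat := ('C(2 * m, m))%:R / (m.+1)%:R.

(* Main.v *)
Require Import Defs.
From mathcomp Require Import all_boot all_order all_algebra.
From mathcomp Require Import zify ring lra.
Set Implicit Arguments. Unset Strict Implicit. Unset Printing Implicit Defensive.
Import Order.TTheory GRing.Theory Num.Theory.
Local Open Scope ring_scope.
Lemma bin_step m : ('C((m.+1).*2, m.+1) * m.+1 = 'C(m.*2, m) * (2 * (m.*2).+1))%N.
Proof.
have h1 := bin_fact (leq_addl m m).
have h2 := bin_fact (leq_addl m.+1 m.+1).
rewrite addnK in h1; rewrite addnK in h2.
rewrite addnn -mul2n in h1; rewrite addnn -mul2n in h2.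
rewrite -!mul2n.
have e2 : (2 * m.+1 = (2 * m).+2)%N by rewrite mulnS.
rewrite e2 in h2 *.
rewrite !factS -h1 in h2.
have hf : (0 < m`!)%N := fact_gt0 m.
apply/eqP; rewrite -(eqn_pmul2r (_ : 0 < m.+1 * (m`! * m`!))%N); last by rewrite !muln_gt0 hf.
apply/eqP; move: h2; set b := 'C(_, m.+1); set c := 'C(_, m); set f := m`!.
move=> h2.
transitivity (b * (m.+1 * f * (m.+1 * f)))%N; first nia.
rewrite h2; nia.
Qed.

Lemma catalanS m : catalan m.+1 * (m.+2)%:R = catalan m * (2 * (2 * m).+1)%:R.
Proof.
rewrite /catalan -mulrA mulVf ?pnatr_eq0 // mulr1.
have := bin_step m; rewrite -!mul2n => /(congr1 (fun x => x%:R : rat)).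
move=> h.
have hm : (m.+1)%:R != 0 :> rat by rewrite pnatr_eq0.
apply: (mulIf hm); rewrite -natrM h natrM; field; by rewrite -natr1 addrC in hm.
Qed.

Lemma onenat_neq0 (a : nat) : 1 + a%:R != 0 :> rat.
Proof. by rewrite addrC natr1 pnatr_eq0. Qed.

Lemma catalan_fact a : catalan a * ((a`!)%:R * ((a.+1)`!)%:R) = ((2 * a)`!)%:R.
Proof.
have := bin_fact (leq_addl a a); rewrite addnK addnn -mul2n => <-.
rewrite /catalan factS !natrM; field.
exact: onenat_neq0.
Qed.

Definition G (n a : nat) : rat := ((2 * a)`!)%:R / ((a`!)%:R * ((a + n)`!)%:R).

Definition rs (n j : nat) : seq rat :=
  [seq - ((2 * k).+1%:R / 2) | k <- index_iota 0 j] ++ [seq - (k%:R) | k <- index_iota j.+2 n.+1].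
Definition P n j : {poly rat} := (4 ^ j)%:R *: \prod_(x <- rs n j) ('X - x%:P).

Lemma Pval n j x : (P n j).[x] = (4 ^ j)%:R * (\prod_(0 <= k < j) (x + (2 * k).+1%:R / 2))
   * \prod_(j.+2 <= k < n.+1) (x + k%:R).
Proof.
rewrite /P hornerZ horner_prod /rs big_cat !big_map -mulrA; congr (_ * (_ * _));
  by apply: eq_bigr => k _; rewrite hornerXsubC opprK.
Qed.

Lemma Psize n j : (j < n)%N -> (size (P n j) <= n)%N.
Proof.
move=> jn; apply: (leq_trans (size_scale_leq _ _)).
rewrite size_prod_XsubC size_cat !size_map !size_iota; lia.
Qed.

Lemma factn a n : (0 < n)%N -> ((a + n)`!)%:R = ((a.+1)`!)%:R * \prod_(2 <= k < n.+1) (a%:R + k%:R) :> rat.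
Proof.
elim: n => // n IH _; case: n IH => [|n] IH; first by rewrite big_geq // mulr1 addn1.
rewrite big_nat_recr //= mulrA -IH // (addnS a n.+1) factS natrM mulrC; congr (_ * _).
by rewrite -natrD !addnS.
Qed.

Lemma G_neq0 n a : G n a != 0.
Proof. by rewrite /G mulf_neq0 ?invr_eq0 ?mulf_neq0 // pnatr_eq0 -lt0n fact_gt0. Qed.

Lemma catalan_P n a j : (j < n)%N -> catalan (a + j) = G n a * (P n j).[a%:R].
Proof.
elim: j => [|j IH] jn.
  rewrite Pval big_geq // expn0 addn0 /G (factn a jn) !mul1r.
  have := catalan_fact a.
  have h1 : (a`!)%:R != 0 :> rat by rewrite pnatr_eq0 -lt0n fact_gt0.
  have h2 : ((a.+1)`!)%:R != 0 :> rat by rewrite pnatr_eq0 -lt0n fact_gt0.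
  have h3 : \prod_(2 <= k < n.+1) (a%:R + k%:R) != 0 :> rat.
    by rewrite prodf_seq_neq0; apply/allP => k; rewrite mem_index_iota => /andP [hk _] /=; rewrite -natrD pnatr_eq0; lia.
  move=> h; apply: (mulIf h1); apply: (mulIf h2); rewrite -mulrA h; field.
  by rewrite h3 h2 h1.
have jn' : (j < n)%N by lia.
have hm : ((a + j).+2)%:R != 0 :> rat by rewrite pnatr_eq0.
have e : catalan (a + j.+1) = catalan (a + j) * (2 * (2 * (a + j)).+1)%:R / ((a + j).+2)%:R.
  by rewrite -catalanS addnS mulfK.
rewrite e IH // !Pval (big_nat_recr j 0) //= (@big_ltn _ _ _ j.+2 n.+1); last lia.
have e1 : ((2 * (2 * (a + j)).+1)%:R : rat) = 2 * (2 * (a%:R + j%:R) + 1).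
  by rewrite natrM -(@natr1 rat (2 * (a + j))) natrM natrD.
have e2 : ((a + j).+2%:R : rat) = a%:R + j%:R + 2 by rewrite -addn2 !natrD.
have e3 : ((2 * j).+1%:R : rat) = 2 * j%:R + 1 by rewrite -(@natr1 rat (2 * j)) natrM.
have e4 : (j.+2%:R : rat) = j%:R + 2 by rewrite -addn2 natrD.
rewrite e1 e2 e3 e4 expnS natrM; rewrite e2 in hm.
by field.
Qed.

Lemma det_poly n (p : 'I_n -> {poly rat}) (x : 'I_n -> rat) :
  (forall j, (size (p j) <= n)%N) ->
  \det (\matrix_(i, j) (p j).[x i]) =
  \det (\matrix_(k, j) (p j)`_k) * \prod_(i < n) \prod_(j < n | (i < j)%N) (x j - x i).
Proof.
move=> hp.
have -> : \matrix_(i, j) (p j).[x i] =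
   (Vandermonde n (\row_j x j))^T *m \matrix_(k, j) (p j)`_k.
  apply/matrixP => i j; rewrite !mxE (horner_coef_wide _ (hp j)).
  by apply: eq_bigr => k _; rewrite !mxE mulrC.
rewrite det_mulmx det_tr det_Vandermonde mulrC; congr (_ * _).
by apply: eq_bigr => i _; apply: eq_bigr => j _; rewrite !mxE.
Qed.

Definition cst n := \det (\matrix_(k, j) (P n j)`_k : 'M[rat]_n).

Lemma base n (b : 'I_n -> nat) :
  \det (\matrix_(i, j) catalan (b i + j)) =
  cst n * \prod_(i < n) \prod_(j < n | (i < j)%N) ((b j)%:R - (b i)%:R) * \prod_(i < n) G n (b i).
Proof.
have -> : \matrix_(i, j) catalan (b i + j) = (
   diag_mx (\row_i G n (b i)) *m \matrix_(i, j) (P n j).[(b i)%:R] : 'M[rat]_n).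
  by apply/matrixP => i j; rewrite mul_diag_mx !mxE (catalan_P _ (ltn_ord j)).
rewrite det_mulmx det_diag det_poly; last by move=> j; apply: Psize.
rewrite mulrC; congr (_ * _); by apply: eq_bigr => i _; rewrite mxE.
Qed.

Lemma L_fact m : \prod_(0 <= k < m) ((k.+1)%:R : rat) = (m`!)%:R.
Proof.
elim: m => [|m IH]; first by rewrite big_geq.
by rewrite big_nat_recr //= IH factS natrM mulrC.
Qed.

Lemma L_neg j : \prod_(0 <= i < j) (i%:R - j%:R : rat) = (-1) ^+ j * (j`!)%:R.
Proof.
rewrite big_nat_rev.
rewrite (eq_big_nat _ _ (F2 := fun i => -1 * (i.+1)%:R)); last first.
  move=> i /andP [_ hi]; rewrite add0n natrB //.
  rewrite -[in RHS](@natr1 rat i). ring.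
by rewrite big_split /= prodr_const_nat subn0 L_fact.
Qed.

Lemma L_D1' i : (4 ^ i)%:R * \prod_(0 <= k < i) (- ((2 * k).+3%:R) / 2 : rat)
   = (-1) ^+ i * ((2 * i).+1`!)%:R / (i`!)%:R.
Proof.
elim: i => [|i IH]; first by rewrite big_geq // expn0 fact0 !mulr1 divr1.
rewrite big_nat_recr //= expnS natrM.
rewrite (_ : forall a b c d : rat, a * b * (c * d) = a * (b * c) * d); last by move=> *; ring.
rewrite IH.
rewrite (_ : (2 * i.+1).+1 = (2 * i).+3)%N; last lia.
rewrite !factS !natrM exprS.
have h : (i`!)%:R != 0 :> rat by rewrite pnatr_eq0 -lt0n fact_gt0.
rewrite (_ : ((2 * i).+2%:R : rat) = 2 * (i.+1)%:R); last by rewrite -natrM; congr _%:R; lia.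
field; rewrite h /=; apply: onenat_neq0.
Qed.

Lemma L_D1 i : (4 ^ i)%:R * \prod_(0 <= k < i) (- (i.+1)%:R + (2 * k).+1%:R / 2 : rat)
   = (-1) ^+ i * ((2 * i).+1`!)%:R / (i`!)%:R.
Proof.
rewrite -L_D1' big_nat_rev; congr (_ * _); apply: eq_big_nat => k /andP [_ hk].
have e : ((2 * (0 + i - k.+1)).+1 + (2 * k).+3 = 2 * i.+1)%N by lia.
have := congr1 (fun x => x%:R : rat) e; rewrite !natrD !natrM => e'.
lra.
Qed.

Lemma L_D2 i n : (i < n)%N ->
  \prod_(i.+2 <= k < n.+1) (- (i.+1)%:R + k%:R : rat) = ((n - i.+1)`!)%:R.
Proof.
move=> hi; rewrite -(add0n i.+2) big_addn subSS -L_fact; apply: eq_big_nat => k _.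
have e : (k + i.+2 = k.+1 + i.+1)%N by lia.
rewrite e natrD; ring.
Qed.

Lemma F1a n : (\prod_(0 <= i < n) ((2 * i)`! * (2 * i).+1`!) = \prod_(0 <= m < 2 * n) m`!)%N.
Proof.
elim: n => [|n IH]; first by rewrite !big_geq.
rewrite big_nat_recr //= IH mulnS !big_nat_recr //= ?mulnA //; lia.
Qed.

Lemma F1b n : (\prod_(0 <= i < n) (i + n)`! * \prod_(0 <= i < n) i`! = \prod_(0 <= m < 2 * n) m`!)%N.
Proof.
rewrite (@big_cat_nat _ _ _ n 0 (2 * n)) //; last lia.
rewrite mulnC; congr (_ * _)%N.
rewrite (big_addn 0 (2 * n) n) (_ : 2 * n - n = n)%N //; lia.
Qed.

Lemma F1 n : (\prod_(i < n) (i + n)`! * \prod_(i < n) i`! = \prod_(i < n) ((2 * i)`! * (2 * i).+1`!))%N.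
Proof. by move: (F1b n) (F1a n); rewrite !big_mkord => -> ->. Qed.

Lemma revfact n : (\prod_(i < n) (n - i.+1)`! = \prod_(i < n) i`!)%N.
Proof.
rewrite -(big_mkord xpredT (fun i => (n - i.+1)`!)) -(big_mkord xpredT (fun i => i`!)) big_nat_rev.
apply: eq_big_nat => i /andP [_ hi].
by congr _`!; lia.
Qed.

Lemma Vx n : \prod_(i < n) \prod_(j < n | (i < j)%N) (- (j.+1)%:R - - (i.+1)%:R : rat)
  = \prod_(j < n) ((-1) ^+ j * (j`!)%:R).
Proof.
rewrite (exchange_big_dep xpredT) //=; apply: eq_bigr => j _.
rewrite -L_neg big_mkord (big_ord_widen n (fun i => i%:R - j%:R : rat) (ltnW (ltn_ord j))).
apply: eq_bigr => i _; rewrite -!natr1; ring.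
Qed.

Lemma P_zero n i j : (i < j)%N -> (j < n)%N -> (P n i).[- (j.+1)%:R] = 0.
Proof.
move=> hij hjn; apply/eqP; rewrite Pval !mulf_eq0; apply/orP; right.
rewrite prodf_seq_eq0; apply/hasP; exists j.+1.
  by rewrite mem_index_iota; lia.
by rewrite /= addNr.
Qed.

Lemma P_diag n i : (i < n)%N -> (P n i).[- (i.+1)%:R] =
   (-1) ^+ i * ((2 * i).+1`!)%:R / (i`!)%:R * ((n - i.+1)`!)%:R.
Proof. by move=> hi; rewrite Pval L_D1 L_D2. Qed.

Lemma fact_neq0 m : (m`!)%:R != 0 :> rat.
Proof. by rewrite pnatr_eq0 -lt0n fact_gt0. Qed.

Lemma cst_val n : cst n = \prod_(i < n) (((i + n)`!)%:R / ((2 * i)`!)%:R).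
Proof.
pose x := fun i : 'I_n => - ((i.+1)%:R) : rat.
have h := @det_poly n (fun j : 'I_n => P n j) x (fun j => Psize (ltn_ord j)).
rewrite -det_tr det_trig in h; last first.
  by apply/is_trig_mxP => i j hij; rewrite !mxE /x P_zero.
rewrite Vx in h.
have hV : \prod_(j < n) ((-1) ^+ j * (j`!)%:R) != 0 :> rat.
  rewrite prodf_seq_neq0; apply/allP => j _ /=; rewrite mulf_neq0 ?fact_neq0 //.
  by rewrite expf_neq0 // oppr_eq0 oner_eq0.
apply: (mulIf hV); rewrite -h.
rewrite (eq_bigr (fun i : 'I_n => (-1) ^+ i * ((2 * i).+1`!)%:R / (i`!)%:R * ((n - i.+1)`!)%:R));
  last by move=> i _; rewrite !mxE /x P_diag.
rewrite !big_split /= !prodfV -!natr_prod revfact.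
have e := F1 n; rewrite big_split /= in e.
have e' := congr1 (fun m => m%:R : rat) e; rewrite /= !natrM in e'.
have hB : (\prod_(i < n) (2 * i)`!)%:R != 0 :> rat.
  by rewrite pnatr_eq0 -lt0n prodn_gt0 // => i; apply: fact_gt0.
have hE : (\prod_(i < n) i`!)%:R != 0 :> rat.
  by rewrite pnatr_eq0 -lt0n prodn_gt0 // => i; apply: fact_gt0.
move: e' hB hE.
set pA := (\prod_(i < n) (i + n)`!)%:R; set pB := (\prod_(i < n) (2 * i)`!)%:R.
set pC := (\prod_(i < n) (2 * i).+1`!)%:R; set pE := (\prod_(i < n) i`!)%:R.
set s := \prod_(i < n) (-1) ^+ i.
move=> e' hB hE.
have eA : pA = pB * pC / pE by rewrite -e' mulfK.
rewrite eA; field; by rewrite hE hB.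
Qed.

Lemma lift_ltn N (s : 'I_N) (i j : 'I_N.-1) : (lift s i < lift s j)%N = (i < j)%N.
Proof. rewrite /= /bump; do 2 case: leqP => ?; apply/idP/idP; lia. Qed.

Lemma nat_to_ord N i (F : nat -> rat) :
  \prod_(i.+1 <= j < N) F j = \prod_(j < N | (i < j)%N) F j.
Proof. by rewrite (@big_nat_widenl _ _ _ i.+1 0 N xpredT F (leq0n i.+1)) big_mkord. Qed.

Lemma Vsplit n (a : nat -> rat) (s : 'I_n.+1) :
  \prod_(0 <= i < n.+1) \prod_(i.+1 <= j < n.+1) (a j - a i) =
  \prod_(i < n) \prod_(j < n | (i < j)%N) (a (lift s j) - a (lift s i))
  * (\prod_(0 <= j < s) (a s - a j)) * \prod_(s.+1 <= j < n.+1) (a j - a s).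
Proof.
rewrite big_mkord (eq_bigr (fun i : 'I_n.+1 => \prod_(j < n.+1 | (i < j)%N) (a j - a i)));
  last by move=> i _; rewrite nat_to_ord.
rewrite (bigD1_ord s) //= nat_to_ord mulrC; congr (_ * _).
rewrite (eq_bigr (fun i : 'I_n => (if (lift s i < s)%N then a s - a (lift s i) else 1) *
     \prod_(j < n | (i < j)%N) (a (lift s j) - a (lift s i)))); last first.
  move=> i _; rewrite big_mkcond (bigD1_ord s) //=; congr (_ * _).
  rewrite -big_mkcond /=; apply: eq_bigl => j; by rewrite lift_ltn.
rewrite big_split /= mulrC; congr (_ * _).
rewrite big_mkord (big_ord_widen n.+1 (fun i => a s - a i) (ltnW (ltn_ord s))).
by rewrite [RHS]big_mkcond (bigD1_ord s) //= ltnn mul1r.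
Qed.

Lemma sgn2 i n : (-1) ^+ i * (-1) ^+ (i + n) = (-1) ^+ n :> rat.
Proof. by rewrite exprD mulrA -exprMn mulrNN mul1r expr1n mul1r. Qed.

Lemma sum_rows n (alpha : nat -> nat) :
  \det (\matrix_(i < n, j < n) (catalan (alpha i + j) + catalan (alpha i.+1 + j)) : 'M[rat]_n)
  = \sum_(s < n.+1) \det (\matrix_(k < n, l < n) catalan (alpha (lift s k) + l) : 'M[rat]_n).
Proof.
pose Bm : 'M[rat]_n.+1 := \matrix_(i, j) if (j < n)%N then catalan (alpha i + j) else (-1) ^+ i.
pose S : 'M[rat]_n.+1 := \matrix_(i, j) (j == i.+1 :> nat)%:R.
have detL : \det (1%:M + S) = 1.
  rewrite -det_tr det_trig; last first.
    apply/is_trig_mxP => i j hij; rewrite !mxE.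
    rewrite (_ : (j == i) = false); last by apply/negbTE; rewrite neq_ltn hij orbT.
    rewrite (_ : (i == j.+1 :> nat) = false) ?addr0 //; apply/negbTE; lia.
  by apply: big1 => i _; rewrite !mxE eqxx (_ : (i == i.+1 :> nat) = false) ?addr0 //; lia.
have eS : forall i j : 'I_n.+1, (S *m Bm) i j = if (i < n)%N then Bm (inord i.+1) j else 0.
  move=> i j; rewrite !mxE; case: ltnP => hi.
    rewrite (bigD1 (inord i.+1)) //= big1 ?addr0.
      by rewrite !mxE inordK // eqxx mul1r.
    move=> k hk; rewrite !mxE (_ : (k == i.+1 :> nat) = false) ?mul0r //.
    apply/negbTE; apply: contra hk => /eqP hk; apply/eqP/val_inj; rewrite /= inordK //.
  apply: big1 => k _; rewrite !mxE (_ : (k == i.+1 :> nat) = false) ?mul0r //.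
  by apply/negbTE; have := ltn_ord k; lia.
have eX : forall i j : 'I_n.+1, ((1%:M + S) *m Bm) i j = Bm i j + if (i < n)%N then Bm (inord i.+1) j else 0.
  by move=> i j; rewrite mulmxDl mul1mx mxE eS.
have hLB : \det ((1%:M + S) *m Bm) = \det Bm by rewrite det_mulmx detL mul1r.
rewrite (expand_det_col _ ord_max) (bigD1 ord_max) //= big1 ?addr0 in hLB; last first.
  move=> i hi; rewrite eX !mxE ltnn.
  have hin : (i < n)%N by have := ltn_ord i; move: hi; rewrite -val_eqE /=; lia.
  by rewrite hin inordK // exprS mulN1r addrN mul0r.
rewrite (expand_det_col _ ord_max) in hLB.
rewrite eX !mxE ltnn addr0 /cofactor in hLB.
have hb : forall m : 'I_n, bump n m = m by move=> m; rewrite /bump leqNgt ltn_ord.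
have eM : row' ord_max (col' ord_max ((1%:M + S) *m Bm)) =
   \matrix_(i < n, j < n) (catalan (alpha i + j) + catalan (alpha i.+1 + j)).
  apply/matrixP => k l; rewrite mxE mxE eX !mxE /= !hb !ltn_ord inordK ?ltnS ?ltn_ord // !ltn_ord.
rewrite eM in hLB.
have eD : forall i : 'I_n.+1, row' i (col' ord_max Bm) =
    \matrix_(k < n, l < n) catalan (alpha (lift i k) + l).
  by move=> i; apply/matrixP => k l; rewrite mxE mxE !mxE /= hb ltn_ord.
rewrite (eq_bigr (fun i : 'I_n.+1 => (-1) ^+ n * \det (\matrix_(k < n, l < n) catalan (alpha (lift i k) + l) : 'M[rat]_n))) in hLB; last first.
  by move=> i _; rewrite eD !mxE ltnn mulrA sgn2.
rewrite -big_distrr /= in hLB.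
have hs : (-1) ^+ n != 0 :> rat by rewrite expf_neq0 // oppr_eq0 oner_eq0.
move/(mulfI hs): hLB => <-.
by rewrite exprD -exprMn mulrNN mulr1 expr1n mul1r.
Qed.

Theorem corollary5 (n : nat) (alpha : nat -> nat) :
  (0 < n)%N ->
  (forall i j, (i <= n)%N -> (j <= n)%N -> alpha i = alpha j -> i = j) ->
  \det (\matrix_(i < n, j < n)
          (catalan (alpha i + j) + catalan (alpha i.+1 + j)) : 'M[rat]_n)
  = (\prod_(0 <= i < n.+1) \prod_(i.+1 <= j < n.+1)
        ((alpha j)%:R - (alpha i)%:R : rat))
    * (\prod_(0 <= i < n) (((i + n)`!)%:R / ((2 * i)`!)%:R : rat))
    * (\prod_(0 <= i < n.+1)
        (((2 * alpha i)`!)%:R / ((alpha i)`!%:R * ((alpha i + n)`!)%:R) : rat))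
    * \sum_(0 <= s < n.+1)
        (((alpha s)`!%:R * ((alpha s + n)`!)%:R)
         / (((2 * alpha s)`!)%:R
            * (\prod_(0 <= j < s) ((alpha s)%:R - (alpha j)%:R))
            * (\prod_(s.+1 <= j < n.+1) ((alpha j)%:R - (alpha s)%:R))) : rat).
Proof.
move=> hn hinj.
rewrite sum_rows big_distrr /= big_mkord.
apply: eq_bigr => s _.
rewrite (@base n (fun k => alpha (lift s k))) cst_val.
rewrite (Vsplit (fun k => (alpha k)%:R) s).
rewrite [\prod_(0 <= i < n) _]big_mkord [\prod_(0 <= i < n.+1) _]big_mkord (bigD1_ord s) //= /G.
have hA : \prod_(0 <= j < s) ((alpha s)%:R - (alpha j)%:R) != 0 :> rat.
  rewrite prodf_seq_neq0; apply/allP => j; rewrite mem_index_iota => /andP [_ hj] /=.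
  rewrite subr_eq0 eqr_nat; apply/eqP => /esym /hinj h.
  have hs := ltn_ord s; have := h ltac:(lia) ltac:(lia); lia.
have hB : \prod_(s.+1 <= j < n.+1) ((alpha j)%:R - (alpha s)%:R) != 0 :> rat.
  rewrite prodf_seq_neq0; apply/allP => j; rewrite mem_index_iota => /andP [hj1 hj] /=.
  rewrite subr_eq0 eqr_nat; apply/eqP => /hinj h.
  have hs := ltn_ord s; have := h ltac:(lia) ltac:(lia); lia.
move: hA hB.
set A := \prod_(0 <= j < s) _; set B := \prod_(s.+1 <= j < n.+1) _.
set V := \prod_(i < n) \prod_(j < n | _) _.
move=> hA hB.
have h1 := fact_neq0 (alpha s); have h2 := fact_neq0 (alpha s + n); have h3 := fact_neq0 (2 * alpha s).
field.
by rewrite hA hB h1 h2 h3.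
Qed.
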